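(* For $t>0$ let $$P(t)=\frac{e^{2 t} (t^3-12 t^2+54 t-86)-e^t (t^3-12 t^2+16 t-160)-26 t-74}{e^t-1},\qquad Q(t)=2e^{2t}-e^t (t^2-6 t+18)+8(t+2).$$ Then $Q(t)>0$ for all $t>0$, the function $P(t)/Q(t)$ is strictly decreasing on $(0,\infty)$, and $$\lim_{t\to0^+}\frac{P(t)}{Q(t)}=1,\qquad \lim_{t\to\infty}\frac{P(t)}{Q(t)}=0.$$ *)

(* Defs.v *)
From Stdlib Require Import Reals.
Open Scope R_scope.

Definition P (t : R) : R :=
  (exp (2 * t) * (t ^ 3 - 12 * t ^ 2 + 54 * t - 86)
   - exp t * (t ^ 3 - 12 * t ^ 2 + 16 * t - 160) - 26 * t - 74) / (exp t - 1).

Definition Q (t : R) : R :=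
  2 * exp (2 * t) - exp t * (t ^ 2 - 6 * t + 18) + 8 * (t + 2).

Definition ratioPQ (t : R) : R := P t / Q t.

Definition limit_pinfty (f : R -> R) (l : R) : Prop :=
  forall eps : R, 0 < eps -> exists M : R, forall t : R, M < t -> Rabs (f t - l) < eps.

(* Main.v *)
Require Import Defs.
From Stdlib Require Import Reals Lra ZArith List Bool.
From Coquelicot Require Import Coquelicot.
Import ListNotations.
Open Scope R_scope.

Definition poly := list Z.
Fixpoint peval (p : poly) (t : R) : R :=
  match p with nil => 0 | c :: q => IZR c + t * peval q t end.
Fixpoint padd (p q : poly) : poly :=
  match p, q with
  | nil, _ => q | _, nil => p
  | a :: p', b :: q' => (a + b)%Z :: padd p' q' end.
Definition pscale (c : Z) (p : poly) : poly := map (Z.mul c) p.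
Fixpoint pmul (p q : poly) : poly :=
  match p with nil => nil | c :: p' => padd (pscale c q) (0%Z :: pmul p' q) end.
Fixpoint pderiv (p : poly) : poly :=
  match p with nil => nil | c :: q => padd q (0%Z :: pderiv q) end.

Lemma peval_add p q t : peval (padd p q) t = peval p t + peval q t.
Proof.
  revert q; induction p as [|a p IH]; intros [|b q]; simpl; try ring.
  rewrite IH, plus_IZR; ring.
Qed.
Lemma peval_scale c p t : peval (pscale c p) t = IZR c * peval p t.
Proof. induction p as [|a p IH]; simpl; [ring|]. rewrite IH, mult_IZR; ring. Qed.
Lemma peval_mul p q t : peval (pmul p q) t = peval p t * peval q t.
Proof. induction p as [|a p IH]; simpl; [ring|]. rewrite peval_add, peval_scale; simpl; rewrite IH; ring. Qed.

Notation dpl := derivable_pt_lim.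
Lemma D_eq (f : R -> R) x l l' : dpl f x l -> l = l' -> dpl f x l'.
Proof. intros H ->; exact H. Qed.
Lemma D_plus f g x a b : dpl f x a -> dpl g x b -> dpl (fun y => f y + g y) x (a + b).
Proof. intros; apply (derivable_pt_lim_plus f g); auto. Qed.
Lemma D_mult f g x a b : dpl f x a -> dpl g x b -> dpl (fun y => f y * g y) x (a * g x + f x * b).
Proof. intros; apply (derivable_pt_lim_mult f g); auto. Qed.
Lemma D_const c x : dpl (fun _ => c) x 0.
Proof. apply derivable_pt_lim_const. Qed.
Lemma D_id x : dpl (fun y => y) x 1.
Proof. apply derivable_pt_lim_id. Qed.
Lemma D_exp x : dpl exp x (exp x).
Proof. apply derivable_pt_lim_exp. Qed.

Lemma peval_deriv p t : dpl (peval p) t (peval (pderiv p) t).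
Proof.
  induction p as [|c q IH]; simpl.
  - apply D_const.
  - rewrite peval_add; simpl.
    eapply D_eq.
    { apply D_plus. apply D_const. apply D_mult. apply D_id. exact IH. }
    cbv beta; ring.
Qed.

Definition epoly := list poly.
Fixpoint eeval (E : epoly) (t : R) : R :=
  match E with nil => 0 | p :: E' => peval p t + exp t * eeval E' t end.
Fixpoint eadd (A B : epoly) : epoly :=
  match A, B with
  | nil, _ => B | _, nil => A
  | p :: A', q :: B' => padd p q :: eadd A' B' end.
Definition eneg (A : epoly) : epoly := map (pscale (-1)) A.
Definition emulp (p : poly) (B : epoly) : epoly := map (pmul p) B.
Fixpoint emul (A B : epoly) : epoly :=
  match A with nil => nil | p :: A' => eadd (emulp p B) (nil :: emul A' B) end.
Fixpoint ederiv (E : epoly) : epoly :=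
  match E with nil => nil | p :: E' => pderiv p :: eadd E' (ederiv E') end.
Definition ev0 (E : epoly) : Z := fold_right (fun p acc => (hd 0 p + acc)%Z) 0%Z E.

Lemma eeval_add A B t : eeval (eadd A B) t = eeval A t + eeval B t.
Proof.
  revert B; induction A as [|p A IH]; intros [|q B]; simpl; try ring.
  rewrite IH, peval_add; ring.
Qed.
Lemma eeval_neg A t : eeval (eneg A) t = - eeval A t.
Proof. induction A as [|p A IH]; simpl; [ring|]. rewrite IH, peval_scale; simpl; ring. Qed.
Lemma eeval_mulp p B t : eeval (emulp p B) t = peval p t * eeval B t.
Proof. unfold emulp; induction B as [|q B IH]; simpl; [ring|]. rewrite IH, peval_mul; ring. Qed.
Lemma eeval_mul A B t : eeval (emul A B) t = eeval A t * eeval B t.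
Proof.
  induction A as [|p A IH]; simpl; [ring|].
  rewrite eeval_add, eeval_mulp; simpl; rewrite IH; ring.
Qed.
Lemma eeval_deriv E t : dpl (eeval E) t (eeval (ederiv E) t).
Proof.
  induction E as [|p E IH]; simpl.
  - apply D_const.
  - rewrite eeval_add.
    eapply D_eq.
    { apply D_plus. apply peval_deriv. apply D_mult. apply D_exp. exact IH. }
    cbv beta; ring.
Qed.
Lemma eeval_0 E : eeval E 0 = IZR (ev0 E).
Proof.
  induction E as [|p E IH]; simpl; [reflexivity|].
  rewrite IH, exp_0, plus_IZR. destruct p; simpl; ring.
Qed.

Definition pzero (p : poly) : bool := forallb (fun c => Z.eqb c 0) p.
Definition ezero (E : epoly) : bool := forallb pzero E.
Definition ppos (p : poly) : bool := forallb (Z.leb 0) p && existsb (Z.ltb 0) p.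

Lemma pzero_sound p t : pzero p = true -> peval p t = 0.
Proof.
  induction p as [|c p IH]; simpl; [reflexivity|].
  intros H; apply andb_prop in H as [H1 H2]. apply Z.eqb_eq in H1; subst.
  rewrite IH; auto; ring.
Qed.
Lemma ezero_sound E t : ezero E = true -> eeval E t = 0.
Proof.
  induction E as [|p E IH]; simpl; [reflexivity|].
  intros H; apply andb_prop in H as [H1 H2].
  rewrite IH, pzero_sound; auto; ring.
Qed.
Lemma pnonneg_sound p t : forallb (Z.leb 0) p = true -> 0 <= t -> 0 <= peval p t.
Proof.
  induction p as [|c p IH]; simpl; [lra|].
  intros H Ht; apply andb_prop in H as [H1 H2]. apply Zle_bool_imp_le in H1.
  apply IZR_le in H1. specialize (IH H2 Ht). nra.
Qed.
Lemma ppos_sound p t : ppos p = true -> 0 < t -> 0 < peval p t.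
Proof.
  unfold ppos. induction p as [|c p IH]; simpl; [discriminate|].
  intros H Ht. apply andb_prop in H as [H1 H3]. apply andb_prop in H1 as [H1 H2].
  apply Zle_bool_imp_le in H1. apply IZR_le in H1.
  apply orb_prop in H3 as [H3|H3].
  - apply Z.ltb_lt in H3. apply IZR_lt in H3.
    pose proof (pnonneg_sound p t H2 (Rlt_le _ _ Ht)). nra.
  - assert (0 < peval p t) by (apply IH; auto; rewrite H2, H3; reflexivity). nra.
Qed.

Lemma pos_from_deriv (g g' : R -> R) :
  (forall t, dpl g t (g' t)) -> 0 <= g 0 -> (forall t, 0 < t -> 0 < g' t) ->
  forall t, 0 < t -> 0 < g t.
Proof.
  intros Hd H0 Hp t Ht.
  destruct (MVT_cor2 g g' 0 t Ht (fun c _ => Hd c)) as [c [Hc Hc']].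
  assert (0 < g' c) by (apply Hp; lra).
  assert (0 < g' c * (t - 0)) by (apply Rmult_lt_0_compat; lra). lra.
Qed.

Fixpoint chk (fuel : nat) (E : epoly) : bool :=
  match fuel with O => false | S f =>
  match E with nil => false | p :: E' =>
    if ezero E' then ppos p
    else if pzero p then chk f E'
    else Z.leb 0 (ev0 E) && chk f (ederiv E)
  end end.

Lemma chk_sound fuel E : chk fuel E = true -> forall t, 0 < t -> 0 < eeval E t.
Proof.
  revert E; induction fuel as [|f IH]; intros E; simpl; [discriminate|].
  destruct E as [|p E']; [discriminate|].
  destruct (ezero E') eqn:Hz.
  - intros H t Ht; simpl. rewrite (ezero_sound E' t Hz). pose proof (ppos_sound p t H Ht). lra.
  - destruct (pzero p) eqn:Hp.
    + intros H t Ht; simpl. rewrite (pzero_sound p t Hp).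
      pose proof (IH E' H t Ht). pose proof (exp_pos t). nra.
    + intros H. apply andb_prop in H as [H1 H2]. apply Zle_bool_imp_le, IZR_le in H1.
      apply (pos_from_deriv (eeval (p :: E')) (eeval (ederiv (p :: E')))).
      * intros; apply eeval_deriv.
      * rewrite eeval_0; exact H1.
      * apply IH; exact H2.
Qed.

Fixpoint chkpre (n fuel : nat) (E : epoly) : bool :=
  match n with O => chk fuel E | S m => Z.leb 0 (ev0 E) && chkpre m fuel (ederiv E) end.

Lemma chkpre_sound n fuel E : chkpre n fuel E = true -> forall t, 0 < t -> 0 < eeval E t.
Proof.
  revert E; induction n as [|m IH]; intros E; simpl.
  - apply chk_sound.
  - intros H. apply andb_prop in H as [H1 H2]. apply Zle_bool_imp_le, IZR_le in H1.
    apply (pos_from_deriv (eeval E) (eeval (ederiv E))).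
    + intros; apply eeval_deriv.
    + rewrite eeval_0; exact H1.
    + apply IH; exact H2.
Qed.

Definition Nd : epoly := [[-74;-26]; [160;-16;12;-1]; [-86;54;-12;1]]%Z.
Definition Qd : epoly := [[16;8]; [-18;6;-1]; [2]]%Z.
Definition Dd : epoly := emul [[-1];[1]]%Z Qd.
Definition Wd : epoly := eadd (emul Nd (ederiv Dd)) (eneg (emul (ederiv Nd) Dd)).
Definition Zd : epoly := eadd Nd (eneg Dd).
Definition t5e4 : epoly := [nil; nil; nil; nil; [0;0;0;0;0;1]]%Z.
Definition t4 : epoly := [[0;0;0;0;1]]%Z.

Lemma cW : chkpre 8 100 Wd = true. Proof. vm_compute. reflexivity. Qed.
Lemma cQ : chkpre 0 100 Qd = true. Proof. vm_compute. reflexivity. Qed.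
Lemma cN : chkpre 4 100 Nd = true. Proof. vm_compute. reflexivity. Qed.
Lemma cZ1 : chkpre 0 100 (eadd t5e4 Zd) = true. Proof. vm_compute. reflexivity. Qed.
Lemma cZ2 : chkpre 0 100 (eadd t5e4 (eneg Zd)) = true. Proof. vm_compute. reflexivity. Qed.
Lemma cD : chkpre 0 100 (eadd Dd (eneg t4)) = true. Proof. vm_compute. reflexivity. Qed.
Lemma cI : chkpre 0 100 (eadd (emul [[2]]%Z Dd) (eneg (emul [[0;1]]%Z Nd))) = true. Proof. vm_compute. reflexivity. Qed.

Lemma exp2 t : exp (2 * t) = exp t * exp t.
Proof. replace (2 * t) with (t + t) by ring. apply exp_plus. Qed.

Definition Nx (t : R) : R := exp (2 * t) * (t ^ 3 - 12 * t ^ 2 + 54 * t - 86)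
   - exp t * (t ^ 3 - 12 * t ^ 2 + 16 * t - 160) - 26 * t - 74.

Lemma eN t : eeval Nd t = Nx t.
Proof. unfold Nx; rewrite exp2; simpl. ring. Qed.
Lemma eQ t : eeval Qd t = Q t.
Proof. unfold Q; rewrite exp2; simpl. ring. Qed.
Lemma eD t : eeval Dd t = (exp t - 1) * Q t.
Proof. unfold Dd; rewrite eeval_mul, eQ; simpl. ring. Qed.
Lemma eW t : eeval Wd t = eeval Nd t * eeval (ederiv Dd) t - eeval (ederiv Nd) t * eeval Dd t.
Proof. unfold Wd; rewrite eeval_add, eeval_neg, !eeval_mul. ring. Qed.

Lemma Qpos t : 0 < t -> 0 < Q t.
Proof. intros; rewrite <- eQ; apply (chkpre_sound _ _ _ cQ); auto. Qed.
Lemma Dbig t : 0 < t -> t ^ 4 < eeval Dd t.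
Proof.
  intros Ht; pose proof (chkpre_sound _ _ _ cD t Ht) as H.
  rewrite eeval_add, eeval_neg in H; unfold t4 in H; cbn [eeval peval] in H; rewrite Rmult_0_r in H. lra.
Qed.
Lemma Dpos t : 0 < t -> 0 < eeval Dd t.
Proof. intros Ht; pose proof (Dbig t Ht); pose proof (pow_lt t 4 Ht); lra. Qed.

Lemma ratio_eq t : 0 < t -> ratioPQ t = eeval Nd t / eeval Dd t.
Proof.
  intros Ht. unfold ratioPQ, P. rewrite eD, eN. fold (Nx t).
  assert (0 < Q t) by (apply Qpos; auto).
  assert (1 < exp t) by (rewrite <- exp_0; apply exp_increasing; auto).
  field; split; lra.
Qed.

Lemma decr s t : 0 < s -> s < t -> ratioPQ t < ratioPQ s.
Proof.
  intros Hs Hst. rewrite !ratio_eq by lra.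
  set (g := fun x => eeval Nd x / eeval Dd x).
  set (g' := fun x => (eeval (ederiv Nd) x * eeval Dd x - eeval (ederiv Dd) x * eeval Nd x) / (eeval Dd x) ^ 2).
  assert (Hd : forall c, s <= c <= t -> dpl g c (g' c)).
  { intros c Hc. eapply D_eq.
    { exact (derivable_pt_lim_div (eeval Nd) (eeval Dd) c _ _ (eeval_deriv Nd c) (eeval_deriv Dd c)
        ltac:(pose proof (Dpos c ltac:(lra)); lra)). }
    unfold g', Rsqr; cbv beta; f_equal; ring. }
  destruct (MVT_cor2 g g' s t Hst Hd) as [c [Hc Hc']].
  assert (Hc0 : 0 < c) by lra.
  assert (HW := chkpre_sound _ _ _ cW c Hc0). rewrite eW in HW.
  assert (HD := Dpos c Hc0).
  assert (g' c < 0).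
  { unfold g'. apply Rdiv_neg_pos. lra. apply pow_lt; lra. }
  assert (Hm : g' c * (t - s) < 0) by nra. unfold g in Hc; cbv beta in Hc. lra.
Qed.

Lemma abs_div_lt (Z D e : R) : 0 < D -> - (e * D) < Z -> Z < e * D -> Rabs (Z / D) < e.
Proof.
  intros HD H1 H2. apply Rabs_def1.
  - apply (Rmult_lt_reg_r D); auto. unfold Rdiv; rewrite Rmult_assoc, Rinv_l; lra.
  - apply (Rmult_lt_reg_r D); auto. unfold Rdiv; rewrite Rmult_assoc, Rinv_l; lra.
Qed.

Lemma lim0 : limit1_in ratioPQ (fun t => 0 < t) 1 0.
Proof.
  intros eps Heps. exists (Rmin 1 (eps / 81)). split.
  { apply Rmin_glb_lt; lra. }
  intros t [Ht Hd]. simpl in *. unfold R_dist in *. rewrite Rminus_0_r, Rabs_pos_eq in Hd by lra.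
  assert (Ht1 : t < 1) by (eapply Rlt_le_trans; [exact Hd| apply Rmin_l]).
  assert (Hte : t < eps / 81) by (eapply Rlt_le_trans; [exact Hd| apply Rmin_r]).
  rewrite ratio_eq by auto.
  replace (eeval Nd t / eeval Dd t - 1) with (eeval Zd t / eeval Dd t).
  2:{ unfold Zd; rewrite eeval_add, eeval_neg. pose proof (Dpos t Ht). field. lra. }
  assert (He : exp t < 3).
  { apply Rlt_le_trans with (exp 1). apply exp_increasing; auto. apply exp_le_3. }
  assert (He0 := exp_pos t).
  assert (HE4 : exp t * (exp t * (exp t * exp t)) < 81).
  { assert (exp t * exp t < 9) by nra. assert (exp t * (exp t * exp t) < 27) by nra. nra. }
  pose proof (chkpre_sound _ _ _ cZ1 t Ht) as H1.
  pose proof (chkpre_sound _ _ _ cZ2 t Ht) as H2.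
  assert (Ht5 : eeval t5e4 t = t ^ 5 * (exp t * (exp t * (exp t * exp t)))) by (unfold t5e4; cbn [eeval peval]; ring).
  rewrite eeval_add, Ht5 in H1. rewrite eeval_add, eeval_neg, Ht5 in H2.
  pose proof (Dbig t Ht) as HD.
  set (E4 := exp t * (exp t * (exp t * exp t))) in *.
  set (Zt := eeval Zd t) in *. set (Dt := eeval Dd t) in *.
  assert (Ht4 : 0 < t ^ 4) by (apply pow_lt; auto).
  assert (Hb : t ^ 5 * E4 < eps * t ^ 4).
  { replace (t ^ 5 * E4) with (t ^ 4 * (t * E4)) by (simpl; ring).
    rewrite (Rmult_comm eps). apply Rmult_lt_compat_l; auto.
    assert (t * E4 < t * 81) by (apply Rmult_lt_compat_l; auto). lra. }
  assert (eps * t ^ 4 < eps * Dt) by (apply Rmult_lt_compat_l; auto).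
  apply abs_div_lt; lra.
Qed.

Lemma liminf : limit_pinfty ratioPQ 0.
Proof.
  intros eps Heps. exists (2 / eps). intros t Ht.
  assert (Ht0 : 0 < t) by (assert (0 < 2 / eps) by (apply Rdiv_lt_0_compat; lra); lra).
  rewrite ratio_eq, Rminus_0_r by auto.
  pose proof (chkpre_sound _ _ _ cN t Ht0) as HN.
  pose proof (chkpre_sound _ _ _ cI t Ht0) as HI.
  rewrite eeval_add, eeval_neg, !eeval_mul in HI. cbn [eeval peval] in HI.
  pose proof (Dpos t Ht0) as HD.
  set (Nt := eeval Nd t) in *. set (Dt := eeval Dd t) in *.
  assert (H2 : 2 < eps * t).
  { apply (Rmult_lt_compat_l eps) in Ht; auto. unfold Rdiv in Ht.
    replace (eps * (2 * / eps)) with 2 in Ht by (field; lra). lra. }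
  apply abs_div_lt; nra.
Qed.

Theorem mainTheorem6 :
  (forall t : R, 0 < t -> 0 < Q t) /\
  (forall s t : R, 0 < s -> s < t -> ratioPQ t < ratioPQ s) /\
  limit1_in ratioPQ (fun t => 0 < t) 1 0 /\
  limit_pinfty ratioPQ 0.
Proof. split; [exact Qpos|split; [exact decr|split; [exact lim0|exact liminf]]]. Qed.
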